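(* Let $n\geqslant2$, $m\geqslant1$, let $\tau$ be a cuspidal $\mathrm{R}$-representation of $\mathrm{GL}_n(k_\mathrm{F})$, and let $g\in\mathcal{C}_n$ be a matrix which is not diagonal. Then $$\mathrm{Hom}_{\mathrm{R}[\overline{\mathrm{K}_n\cap g\mathrm{K}_n(m)g^{-1}}]}(1,\tau)=0.$$
   Context: $\mathrm{F}$ non-archimedean local field, ring of integers $\mathfrak{o}_\mathrm{F}$, maximal ideal $\mathfrak{p}_\mathrm{F}=\varpi_\mathrm{F}\mathfrak{o}_\mathrm{F}$, normalized valuation $\mathrm{val}_\mathrm{F}$, residue field $k_\mathrm{F}$ of characteristic $p$. $\mathrm{R}$ algebraically closed of characteristic $\ell\neq p$. $\mathrm{K}_n=\mathrm{GL}_n(\mathfrak{o}_\mathrm{F})$, $\mathrm{K}_n^1=1+\mathrm{M}_n(\mathfrak{p}_\mathrm{F})$; for a subgroup $H\subseteq\mathrm{K}_n$, $\overline H$ is its image in $\mathrm{K}_n/\mathrm{K}_n^1=\mathrm{GL}_n(k_\mathrm{F})$. For $m\geqslant1$, $\mathrm{K}_n(m)=\{\left(\begin{smallmatrix}a&b\\c&d\end{smallmatrix}\right)\in\mathrm{K}_n: c\in\mathrm{M}_{1\times(n-1)}(\mathfrak{p}_\mathrm{F}^m),\ d\in1+\mathfrak{p}_\mathrm{F}^m\}$. Cuspidal representation of $\mathrm{GL}_n(k_\mathrm{F})$: irreducible with no nonzero vectors fixed by the unipotent radical of any proper parabolic subgroup. $\mathcal{C}_n$ is the set of matrices $$\begin{pmatrix}\varpi_\mathrm{F}^{\alpha_{n-1}}&&&&\\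 &\varpi_\mathrm{F}^{\alpha_{n-2}}&&&\\ &&\ddots&&\\ &&&\varpi_\mathrm{F}^{\alpha_1}&\\ \tilde v_{n-1}&\tilde v_{n-2}&\cdots&\tilde v_1&1\end{pmatrix}$$ with integers $0\leqslant\alpha_1\leqslant\dots\leqslant\alpha_{n-1}$, $v_i\in\mathfrak{o}_\mathrm{F}/\mathfrak{p}_\mathrm{F}^m$ with fixed lifts $\tilde v_i\in\mathfrak{o}_\mathrm{F}$ ($\tilde 0=0$), and for each $i$ either $\tilde v_i=0$ or $\mathrm{val}_\mathrm{F}(\tilde v_i)<\alpha_i$. *)

(* Defs.v *)
From HB Require Import structures.
From mathcomp Require Import all_boot all_order all_algebra all_fingroup.
From mathcomp Require Import mxrepresentation.
Set Implicit Arguments. Unset Strict Implicit. Unset Printing Implicit Defensive.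
Import Order.TTheory GRing.Theory Num.Theory.
Local Open Scope ring_scope.

Section LocalField.
Variables (F : fieldType) (val : F -> int).

(* "val_F(x) >= c", with the convention val_F(0) = +oo. *)
Definition vge (x : F) (c : int) : bool := (x == 0) || (c <= val x).

(* F is a non-archimedean local field with normalized valuation val
   (the value of val at 0 is irrelevant), and residue field k, realised by the
   reduction map red : o_F -> k_F (values of red outside o_F are irrelevant). *)
Record is_nalocal_field (k : finFieldType) (red : F -> k) : Prop := {
  val_mul : forall x y, x != 0 -> y != 0 -> val (x * y) = val x + val y;
  val_ultra : forall x y (c : int), vge x c -> vge y c -> vge (x + y) c;
  val_normalized : exists x, x != 0 /\ val x = 1;
  val_complete : forall u : nat -> F,
      (forall c : int, exists M, forall i j, (M <= i)%N -> (M <= j)%N ->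
          vge (u i - u j) c) ->
      exists l, forall c : int, exists M, forall i, (M <= i)%N -> vge (u i - l) c;
  red_add : forall x y, vge x 0 -> vge y 0 -> red (x + y) = red x + red y;
  red_mul : forall x y, vge x 0 -> vge y 0 -> red (x * y) = red x * red y;
  red_one : red 1 = 1;
  red_ker : forall x, vge x 0 -> (red x == 0) = vge x 1;
  red_surj : forall a : k, exists x, vge x 0 /\ red x = a
}.

(* Rep = the set of fixed lifts to o_F of the elements of o_F / p_F^m,
   with the lift of 0 equal to 0. *)
Definition lift_system (m : nat) (Rep : F -> Prop) : Prop :=
  [/\ forall r, Rep r -> vge r 0,
      Rep 0,
      forall x, vge x 0 -> exists r, Rep r /\ vge (x - r) m%:Z &
      forall r1 r2, Rep r1 -> Rep r2 -> vge (r1 - r2) m%:Z -> r1 = r2].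

Variable N : nat.

(* K_n = GL_n(o_F) *)
Definition inK (A : 'M[F]_N.+1) : Prop :=
  (forall i j, vge (A i j) 0) /\ \det A != 0 /\ val (\det A) = 0.

Definition inKm (m : nat) (A : 'M[F]_N.+1) : Prop :=
  [/\ inK A,
      forall j : 'I_N.+1, j != ord_max -> vge (A ord_max j) m%:Z &
      vge (A ord_max ord_max - 1) m%:Z].

(* The matrix of C_n with parameters alpha_1..alpha_{n-1}, vt_1..vt_{n-1}
   (here n = N.+1; indices 0 of alpha and vt are unused). *)
Definition Cmat (w : F) (alpha : nat -> nat) (vt : nat -> F) : 'M[F]_N.+1 :=
  \matrix_(i, j)
    if (i < N)%N then (if i == j then w ^+ alpha (N - i)%N else 0)
    else (if (j == N :> nat) then 1 else vt (N - j)%N).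

(* g belongs to C_n (w is the fixed uniformizer, Rep the fixed lifts) *)
Definition inCn (w : F) (m : nat) (Rep : F -> Prop) (g : 'M[F]_N.+1) : Prop :=
  exists (alpha : nat -> nat) (vt : nat -> F),
    [/\ forall i, (1 <= i)%N -> (i < N)%N -> (alpha i <= alpha i.+1)%N,
        forall i, (1 <= i <= N)%N ->
          Rep (vt i) /\ (vt i = 0 \/ val (vt i) < (alpha i)%:Z) &
        g = Cmat w alpha vt].

End LocalField.

Section Cuspidal.
Variables (n : nat) (k : finFieldType) (R : fieldType).

(* Block index of i for the composition of n with break points S
   (a block starts at each s in S with s > 0). *)
Definition blk (S : {set 'I_n.-1.+1}) (i : 'I_n.-1.+1) : nat :=
  #|[set s in S | (0 < s)%N && (s <= i)%N]|.

(* Unipotent radical of the standard parabolic subgroup attached to S: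
   block upper unitriangular matrices. *)
Definition stdUnip (S : {set 'I_n.-1.+1}) : {set {'GL_n[k]}} :=
  [set x : {'GL_n[k]} | [forall i, forall j,
      (GLval x i j == (i == j)%:R) || (blk S i < blk S j)%N]].

(* Cuspidal: irreducible, and no nonzero vector fixed by the unipotent radical
   of any proper parabolic subgroup (= any GL_n(k)-conjugate of a standard
   one with at least one break point). *)
Definition cuspidal d (rho : mx_representation R 'GL_n[k] d) : Prop :=
  mx_irreducible rho /\
  forall (S : {set 'I_n.-1.+1}) (h : {'GL_n[k]}),
    (exists2 s, s \in S & (0 < s)%N) ->
    forall v : 'rV[R]_d,
      (forall u, u \in stdUnip S -> v *m rho (u ^ h)%g = v) -> v = 0.

End Cuspidal.

(* Main.v *)
Require Import Defs.
From HB Require Import structures.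
From mathcomp Require Import all_boot all_order all_algebra all_fingroup.
From mathcomp Require Import mxrepresentation zify.
Set Implicit Arguments. Unset Strict Implicit. Unset Printing Implicit Defensive.
Import Order.TTheory GRing.Theory Num.Theory.
Local Open Scope ring_scope.
Section Val.
Variables (F : fieldType) (val : F -> int) (k : finFieldType) (red : F -> k).
Hypothesis hF : is_nalocal_field val red.

Lemma val1 : val 1 = 0.
Proof.
have := val_mul hF (oner_neq0 F) (oner_neq0 F); rewrite mulr1 => h.
by have := subrr (val 1); rewrite {1}h addrK.
Qed.

Lemma valN1 : val (-1) = 0.
Proof.
have n1 : (-1 : F) != 0 by rewrite oppr_eq0 oner_neq0.
have := val_mul hF n1 n1; rewrite mulrNN mulr1 val1 => h.
lia.
Qed.

Lemma vge0 c : vge val 0 c. Proof. by rewrite /vge eqxx. Qed.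

Lemma vgeN x c : vge val x c -> vge val (- x) c.
Proof.
rewrite /vge oppr_eq0; case: eqP => //= /eqP x0 h.
by rewrite -mulN1r (val_mul hF) ?valN1 ?add0r // oppr_eq0 oner_neq0.

Qed.

Lemma vge_mul x y c1 c2 : vge val x c1 -> vge val y c2 -> vge val (x * y) (c1 + c2).
Proof.
rewrite /vge mulf_eq0; case: eqP => //= /eqP x0; case: eqP => //= /eqP y0.
rewrite (val_mul hF) // => h1 h2; exact: lerD.
Qed.

Lemma vge_le x c c' : c' <= c -> vge val x c -> vge val x c'.
Proof. rewrite /vge => h; case: eqP => //= _ h2; exact: le_trans h2. Qed.

Lemma vge1 : vge val 1 0. Proof. by rewrite /vge val1 lexx orbT. Qed.

Lemma vge_nat (b : bool) : vge val (b%:R) 0.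
Proof. by case: b; [exact: vge1|exact: vge0]. Qed.

Lemma vgeD x y c : vge val x c -> vge val y c -> vge val (x + y) c.
Proof. exact: (val_ultra hF). Qed.

Lemma val_exp w a : w != 0 -> val (w ^+ a) = (a%:Z * val w)%R.
Proof.
move=> w0; elim: a => [|a IH]; first by rewrite expr0 val1 mul0r.
rewrite exprS (val_mul hF) ?expf_neq0 // IH -[a.+1]addn1 PoszD mulrDl mul1r addrC.
by [].
Qed.

Lemma red0 : red 0 = 0.
Proof. by apply/eqP; rewrite (red_ker hF (vge0 0)) vge0. Qed.

Lemma red_small y : vge val y 1 -> red y = 0.
Proof. move=> h; apply/eqP; rewrite (red_ker hF) //; exact: vge_le h. Qed.

Lemma one_plus y : vge val y 1 -> 1 + y != 0 /\ val (1 + y) = 0.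
Proof.
move=> hy.
have h1 : vge val (1 + y) 0 by apply: vgeD; [exact: vge1| exact: vge_le hy].
have nz : 1 + y != 0.
  apply/negP => /eqP e; have ey : y = -1 by apply/eqP; rewrite -addr_eq0 addrC e.
  by move: hy; rewrite ey /vge oppr_eq0 oner_eq0 valN1.
split => //; move: h1; rewrite /vge (negbTE nz) /= => h1.
apply/eqP; rewrite eq_le h1 andbT; apply/negP => /negP; rewrite -ltNge => h2.
have : vge val ((1 + y) + - y) 1.
  apply: vgeD; [apply/orP; right; lia| exact: vgeN].
by rewrite addrK /vge oner_eq0 val1.
Qed.

End Val.
Section Mx.
Variables (R : comNzRingType) (N : nat).
Implicit Types (a b i j : 'I_N.+1) (M : 'M[R]_N.+1).

Definition Emx a b (c : R) : 'M[R]_N.+1 := 1%:M + c *: delta_mx a b.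

Lemma EmxE a b c i j : Emx a b c i j = (i == j)%:R + c * ((i == a) && (j == b))%:R.
Proof. by rewrite !mxE. Qed.

Lemma mul_delta_l a b M i j : (delta_mx a b *m M) i j = (i == a)%:R * M b j.
Proof.
rewrite mxE (bigD1 b) //= big1 ?addr0 => [|l /negbTE nl]; rewrite mxE.
  by rewrite eqxx andbT.
by rewrite nl andbF mul0r.
Qed.

Lemma mul_delta_r a b M i j : (M *m delta_mx a b) i j = M i a * (j == b)%:R.
Proof.
rewrite mxE (bigD1 a) //= big1 ?addr0 => [|l /negbTE nl]; rewrite mxE.
  by rewrite eqxx.
by rewrite nl mulr0.
Qed.

Lemma mul_Emx_l a b c M i j :
  (Emx a b c *m M) i j = M i j + (i == a)%:R * (c * M b j).
Proof.
rewrite mulmxDl mul1mx mxE; congr (_ + _).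
by rewrite -scalemxAl mxE mul_delta_l mulrCA.
Qed.

Lemma mul_Emx_r a b c M i j :
  (M *m Emx a b c) i j = M i j + M i a * c * (j == b)%:R.
Proof.
rewrite mulmxDr mulmx1 mxE; congr (_ + _).
by rewrite -scalemxAr mxE mul_delta_r mulrA (mulrC c) -mulrA mulrCA mulrA.
Qed.

Lemma ordF i j : (i < j)%N -> (i == j) = false.
Proof. by move=> h; rewrite -val_eqE /= ltn_eqF. Qed.
Lemma ordF' i j : (j < i)%N -> (i == j) = false.
Proof. by move=> h; rewrite -val_eqE /= gtn_eqF. Qed.

Lemma Emx_diag a b c i : a != b -> Emx a b c i i = 1.
Proof.
move=> /negbTE nab; rewrite EmxE eqxx; case: (i =P a) => [->|_] /=.
  by rewrite nab mulr0 addr0.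
by rewrite mulr0 addr0.
Qed.

Lemma det_Emx a b c : \det (Emx a b c) = if a == b then 1 + c else 1.
Proof.
case: (ltngtP a b) => [ab|ba|/val_inj ab].
- have nab := ordF ab; rewrite nab -det_tr det_trig.
    rewrite (eq_bigr (fun _ => 1)) ?prodr_const ?expr1n // => i _.
    by rewrite mxE Emx_diag ?nab.
  apply/is_trig_mxP => i j ij; rewrite !mxE; case: (j =P a) => [ei|_]; last first.
    by rewrite ?andbF ?andFb mulr0 addr0 ordF'.
  case: (i =P b) => [ej|_]; last by rewrite mulr0 addr0 ordF'.
  by move: ij; rewrite ei ej ltnNge ltnW.
- have nab := ordF' ba; rewrite nab det_trig.
    rewrite (eq_bigr (fun _ => 1)) ?prodr_const ?expr1n // => i _.
    by rewrite Emx_diag ?nab.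
  apply/is_trig_mxP => i j ij; rewrite !mxE; case: (i =P a) => [ei|_]; last first.
    by rewrite ?andbF ?andFb mulr0 addr0 ordF.
  case: (j =P b) => [ej|_]; last by rewrite mulr0 addr0 ordF.
  by move: ij; rewrite ei ej ltnNge ltnW.
- subst b; rewrite eqxx det_trig.
    rewrite (bigD1 a) //= big1 ?mulr1 => [|i /negbTE ia]; rewrite !mxE eqxx ?ia //.
      by rewrite mulr1.
    by rewrite mulr0 addr0.
  apply/is_trig_mxP => i j ij; rewrite !mxE ordF //.
  case: eqP => [ei|_]; last by rewrite mulr0 addr0.
  case: eqP => [ej|_]; last by rewrite mulr0 addr0.
  by move: ij; rewrite ei ej ltnn.
Qed.

End Mx.
Section Lifts.
Variables (F : fieldType) (val : F -> int) (k : finFieldType) (red : F -> k).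
Hypothesis hF : is_nalocal_field val red.
Variable N : nat.

Lemma vge_sum (I : Type) (r : seq I) (P : pred I) (f : I -> F) c :
  (forall i, P i -> vge val (f i) c) -> vge val (\sum_(i <- r | P i) f i) c.
Proof.
move=> h; apply: (big_ind (fun x => vge val x c)) => //; first exact: vge0.
by move=> x y; apply: (vgeD hF).
Qed.

Lemma vge_mulmx (A B : 'M[F]_N.+1) :
  (forall i j, vge val (A i j) 0) -> (forall i j, vge val (B i j) 0) ->
  forall i j, vge val ((A *m B) i j) 0.
Proof.
move=> hA hB i j; rewrite mxE; apply: vge_sum => l _.
by rewrite -[0]addr0; apply: (vge_mul hF).
Qed.

Lemma vge_Emx (a b : 'I_N.+1) c i j : vge val c 0 -> vge val (Emx a b c i j) 0.
Proof.
move=> hc; rewrite EmxE; apply: (vgeD hF); first exact: (vge_nat hF).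
by rewrite -[0]addr0; apply: (vge_mul hF) => //; exact: (vge_nat hF).
Qed.

Lemma det_Emx_ok (a b : 'I_N.+1) c : vge val c 0 -> (a == b -> vge val c 1) ->
  \det (Emx a b c) != 0 /\ val (\det (Emx a b c)) = 0.
Proof.
move=> hc hab; rewrite det_Emx; case: (a =P b) => [e|_].
  by apply: (one_plus hF) => //; apply: hab; apply/eqP.
by rewrite oner_eq0 (val1 hF).
Qed.

Lemma inK_Emx (a b : 'I_N.+1) c : vge val c 0 -> (a == b -> vge val c 1) ->
  inK val (Emx a b c).
Proof.
move=> hc hab; split; first by move=> i j; apply: vge_Emx.
exact: det_Emx_ok.
Qed.

Lemma inKm_Emx m (a b : 'I_N.+1) c : (a < N)%N -> vge val c 0 ->
  (a == b -> vge val c 1) -> inKm val m (Emx a b c).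
Proof.
move=> aN hc hab; split; first exact: inK_Emx.
  move=> j jN; rewrite EmxE.
  have -> : (@ord_max N == a) = false by apply/negbTE; rewrite -val_eqE /= neq_ltn aN orbT.
  by rewrite andFb mulr0 addr0 eq_sym (negbTE jN) vge0.
rewrite EmxE eqxx.
have -> : (@ord_max N == a) = false by apply/negbTE; rewrite -val_eqE /= neq_ltn aN orbT.
by rewrite andFb mulr0 addr0 subrr vge0.
Qed.

Lemma red1 : red 1 = 1. Proof. exact: (red_one hF). Qed.

Lemma red_nat (b : bool) : red b%:R = b%:R.
Proof. by case: b; rewrite ?red1 ?(red0 hF). Qed.

Lemma red_Emx (a b : 'I_N.+1) c : a != b -> vge val c 0 ->
  map_mx red (Emx a b c) = Emx a b (red c).
Proof.
move=> /negbTE ab hc; apply/matrixP => i j; rewrite !mxE.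
case: (i =P a) => [ei|_]; last by rewrite /= !mulr0 !addr0 red_nat.
case: (j =P b) => [ej|_]; last by rewrite /= !mulr0 !addr0 red_nat.
by rewrite ei ej ab /= !mulr1 !add0r.
Qed.

Lemma red_add_small (M : 'M[F]_N.+1) y (a b : 'I_N.+1) :
  (forall i j, vge val (M i j) 0) -> vge val y 1 ->
  map_mx red (M + y *: delta_mx a b) = map_mx red M.
Proof.
move=> hM hy; apply/matrixP => i j; rewrite !mxE.
case: ((i == a) && (j == b)) => /=; last by rewrite mulr0 addr0.
rewrite mulr1 (red_add hF) ?(red_small hF hy) ?addr0 //.
exact: vge_le hy.
Qed.

End Lifts.
From mathcomp Require Import ring.
Ltac slia := repeat match goal with
  | H : ?T |- _ => lazymatch T with
      | is_true (leq _ _) => fail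
      | is_true (_ && _) => fail
      | @eq nat _ _ => fail
      | @eq int _ _ => fail
      | _ => clear H
    end
  end; lia.

Theorem proposition4p6
  (F : fieldType) (val : F -> int) (k : finFieldType) (red : F -> k)
  (hF : is_nalocal_field val red)
  (w : F) (hw : w != 0 /\ val w = 1)
  (R : closedFieldType)
  (hR : forall p : nat, p \in [pchar k] -> p \notin [pchar R])
  (n m : nat) (hn : (2 <= n)%N) (hm : (1 <= m)%N)
  (Rep : F -> Prop) (hRep : lift_system val m Rep)
  (d : nat) (rho : mx_representation R 'GL_n[k] d) (hcusp : cuspidal rho)
  (g : 'M[F]_n.-1.+1) (hg : inCn val w m Rep g) (hnd : ~~ is_diag_mx g) :
  forall v : 'rV[R]_d,
    (forall (A : 'M[F]_n.-1.+1) (x : {'GL_n[k]}),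
        inK val A -> inKm val m (invmx g *m A *m g) ->
        GLval x = map_mx red A -> v *m rho x = v) ->
    v = 0.
Proof.
set N := n.-1.
have N1 : (1 <= N)%N by rewrite /N; move: hn; clear; case: n => [|[|]].
move=> v hv.
case: hg => alpha [vt [hmono hvt eg]].
have /existsP [i0 /existsP [j0' /andP [ij0 gij0]]] :
    [exists i, exists j, (i != j) && (g i j != 0)].
  apply: contraNT hnd; rewrite negb_exists => /forallP H.
  apply/is_diag_mxP => i j ij; move: (H i); rewrite negb_exists => /forallP /(_ j).
  by rewrite ij /= negbK => /eqP.
have gtop : forall i j : 'I_N.+1, (i < N)%N -> g i j = (i == j)%:R * w ^+ alpha (N - i)%N.
  move=> i j iN; rewrite eg mxE iN; case: (i == j) => /=; by rewrite ?mul1r ?mul0r.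
have gbot : forall i j : 'I_N.+1, (N <= i)%N ->
    g i j = if (j == N :> nat) then 1 else vt (N - j)%N.
  by move=> i j iN; rewrite eg mxE ltnNge iN.
have exP : exists j, (j < N)%N && (vt (N - j)%N != 0).
  exists j0'; move: gij0; have [iN|iN] := ltnP i0 N.
    by rewrite gtop // (negbTE ij0) mul0r eqxx.

  rewrite gbot //; case: (nat_of_ord j0' =P N) => [e|nj]; last by move=> ->; rewrite andbT ltn_neqAle -ltnS ltn_ord andbT; apply/eqP.
  by case/negP: ij0; apply/eqP/val_inj; have := ltn_ord i0; rewrite /= e; slia.
have ub : forall j, (j < N)%N && (vt (N - j)%N != 0) -> (j <= N)%N.
  by move=> j /andP[/ltnW].
case: (ex_maxnP exP ub) => j0 /andP [j0N vj0] j0max.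
set t := (N - j0)%N in vj0.
have ht : (0 < t <= N)%N by rewrite /t; apply/andP; split; slia.
have [Rt vt_lt] := hvt t ht.
have vtlt : val (vt t) < (alpha t)%:Z by case: vt_lt => // e; rewrite e eqxx in vj0.
have vt0 : 0 <= val (vt t).
  by case: hRep => h0 _ _ _; move: (h0 _ Rt); rewrite /vge (negbTE vj0).
have mono : forall i i', (0 < i)%N -> (i <= i' <= N)%N -> (alpha i <= alpha i')%N.
  move=> i i' ipos; elim: i' => [|i' IH]; first slia.
  rewrite leq_eqVlt => /andP [/orP [/eqP -> // | ii'] i'N].
  have h1 : (alpha i <= alpha i')%N by apply: IH; apply/andP; split; slia.
  have h2 : (alpha i' <= alpha i'.+1)%N by apply: hmono; rewrite -/N; slia.
  exact: leq_trans h1 h2.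
have zero : forall p : nat, (j0 < p)%N -> (p < N)%N -> vt (N - p)%N = 0.
  move=> p j0p pN; apply/eqP; apply: contraTT j0p => nz; rewrite -leqNgt.
  by apply: j0max; rewrite pN.
have gU : g \in unitmx.
  rewrite unitmxE unitfE det_trig.
    apply/prodf_neq0 => i _; have [iN|iN] := ltnP i N.
      by rewrite gtop // eqxx mul1r expf_neq0 //; case: hw.
    rewrite gbot //; have -> : (i == N :> nat) by have := ltn_ord i; slia.
    exact: oner_neq0.
  apply/is_trig_mxP => i j ij; have [iN|iN] := ltnP i N.
    by rewrite gtop // ordF // mul0r.
  by have := ltn_ord j; slia.
have vgew : forall e : nat, vge val (w ^+ e) e%:Z.
  by move=> e; rewrite /vge (val_exp hF) ?(proj2 hw) ?mulr1 ?lexx ?orbT //; case: hw.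
have vgew0 : forall e : nat, vge val (w ^+ e) 0.
  by move=> e; apply: vge_le (vgew e).
pose J := (inord j0 : 'I_N.+1).
have JE : (J : nat) = j0 by rewrite inordK //; slia.
have key : forall (p q : 'I_N.+1) (c : k), (j0 < p)%N -> (q <= j0)%N ->
    forall x : {'GL_n[k]}, GLval x = Emx p q c -> v *m rho x = v.
  move=> p q c j0p qj0 x xE.
  have [x0 [hx0 rx0]] := red_surj hF c.
  have qN : (q < N)%N by slia.
  have pq : p != q by rewrite ordF' //; slia.
  have [pN|pN] := ltnP p N.
  + set e := (alpha (N - q)%N - alpha (N - p)%N)%N.
    have ape : (alpha (N - p)%N <= alpha (N - q)%N)%N.
      by apply: mono; [slia|]; apply/andP; split; slia.
    have AgB : Emx p q x0 *m g = g *m Emx p q (x0 * w ^+ e).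
      apply/matrixP => i j; rewrite mul_Emx_l mul_Emx_r; congr (_ + _).
      rewrite (gtop q) // (eq_sym q j).
      have [iN|iN] := ltnP i N.
        rewrite gtop //.
        case: (i =P p) => [->|_]; case: (j =P q) => _ /=;
          rewrite ?mulr1n ?mulr0n ?mul0r ?mulr0 ?mul1r ?mulr1 //.
        by rewrite mulrCA -exprD subnKC.
      rewrite gbot // ordF' ?(ltn_eqF pN) ?zero ?mul0r //; slia.
    apply: (hv (Emx p q x0)).
    * by apply: (inK_Emx hF) => // /eqP e'; rewrite e' eqxx in pq.
    * rewrite -mulmxA AgB mulKmx //; apply: (inKm_Emx hF) => //.
        by rewrite -[0]addr0; apply: (vge_mul hF).
      by move=> /eqP e'; rewrite e' eqxx in pq.
    * by rewrite xE (red_Emx hF) // rx0.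
  + have pE : (p : nat) = N by have := ltn_ord p; slia.
    set y := x0 * w ^+ alpha t / vt t.
    have hy : vge val y 1.
      rewrite /y /vge; case: (x0 =P 0) => [->|/eqP x0n]; first by rewrite !mul0r eqxx.
      have wn : w ^+ alpha t != 0 by rewrite expf_neq0 //; case: hw.
      have vin : (vt t)^-1 != 0 by rewrite invr_eq0.
      have vinv : val (vt t)^-1 = - val (vt t).
        have := (val_mul hF) _ _ vj0 vin; rewrite mulfV // (val1 hF) => h.
        slia.
      rewrite !(val_mul hF) ?mulf_neq0 // (val_exp hF) ?(proj2 hw) ?mulr1 ?vinv; last by case: hw.
      move: hx0; rewrite /vge (negbTE x0n) /= => hx0.
      apply/orP; right; move: hx0 vtlt; move: (val x0) (val (vt t)) (alpha t) => a b c'.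
      clear; lia.
    have hy0 : vge val y 0 by apply: vge_le hy.
    set e := (alpha (N - q)%N - alpha t)%N.
    have ate : (alpha t <= alpha (N - q)%N)%N.
      by apply: mono; [slia|]; apply/andP; split; rewrite /t; slia.
    have Jq : J != p by rewrite ordF //; slia.
    have AE : Emx J q y *m Emx p q x0 = Emx p q x0 + y *: delta_mx J q.
      rewrite {1}/Emx mulmxDl mul1mx mulmxDr mulmx1 /Emx -!scalemxAl -!scalemxAr.
      by rewrite mul_delta_mx_0 1?eq_sym // !scaler0 addr0.
    have AgB : Emx J q y *m Emx p q x0 *m g = g *m Emx J q (y * w ^+ e).
      apply/matrixP => i j; rewrite -mulmxA mul_Emx_l !mul_Emx_l mul_Emx_r.
      rewrite -addrA; congr (_ + _).
      rewrite (gtop q) // (eq_sym q j) (eq_sym q p) (negbTE pq) mul0r addr0.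
      have [iN|iN] := ltnP i N.
        have ip : (i == p) = false by apply: ordF; rewrite pE.
        rewrite (gtop i) // ip.
        case: (i =P J) => [->|_]; case: (j =P q) => _ /=;
          rewrite ?mulr1n ?mulr0n ?mul0r ?mulr0 ?mul1r ?mulr1 ?add0r ?addr0 //.
        by rewrite JE -/t mulrCA -exprD subnKC.
      have ip : (i == p) by rewrite -val_eqE /= pE; have := ltn_ord i; slia.
      have iJ : (i == J) = false by apply: ordF'; rewrite JE; slia.
      have jN : (j0 == N) = false by apply/negbTE; rewrite neq_ltn j0N.
      rewrite ip (gbot i) // iJ JE jN -/t.
      case: (j =P q) => _ /=; rewrite ?mulr1n ?mulr0n ?mul0r ?mulr0 ?mul1r ?mulr1 ?add0r ?addr0 //.
      have -> : w ^+ alpha (N - q)%N = w ^+ alpha t * w ^+ e by rewrite -exprD subnKC.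
      rewrite /y; field; exact: vj0.
    have Ahint : forall i j, vge val ((Emx J q y *m Emx p q x0) i j) 0.
      by apply: (vge_mulmx hF) => i j; apply: (vge_Emx hF).
    apply: (hv (Emx J q y *m Emx p q x0)).
    * split => //; rewrite det_mulmx.
      have [d1 v1] := @det_Emx_ok _ _ _ _ hF _ J q y hy0 (fun _ => hy).
      have [d2 v2] : \det (Emx p q x0) != 0 /\ val (\det (Emx p q x0)) = 0.
        by apply: (det_Emx_ok hF) => // /eqP e'; rewrite e' eqxx in pq.
      by rewrite mulf_neq0 // (val_mul hF) // v1 v2.
    * rewrite -mulmxA AgB mulKmx //; apply: (inKm_Emx hF).
      - by rewrite JE.
      - by rewrite -[0]addr0; apply: (vge_mul hF) => //; exact: vgew0.
      - move=> _; apply: (vge_le (c := 1 + e%:Z)); first by rewrite lerDl.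
        by apply: (vge_mul hF) => //; exact: vgew.
    * rewrite xE AE (red_add_small hF) //; last by move=> i j; apply: (vge_Emx hF).
      by rewrite (red_Emx hF) // rx0.
have step2 : forall (s : nat) (D : {set 'I_N.+1 * 'I_N.+1}), (#|D| <= s)%N ->
    (forall ij, ij \in D -> (j0 < ij.1)%N && (ij.2 <= j0)%N) ->
    forall X : 'M[k]_N.+1, (forall i j, X i j != 0 -> (i, j) \in D) ->
    forall x : {'GL_n[k]}, GLval x = 1%:M + X -> v *m rho x = v.
  elim=> [|s IH] D hD hDP X hX x xE.
  - have X0 : X = 0.
      apply/matrixP => i j; rewrite mxE; apply/eqP; apply: contraTT hD => /hX hij.
      by rewrite -ltnNge card_gt0; apply/set0Pn; exists (i, j).
    have -> : x = 1%g by apply: val_inj; change (GLval x = GLval 1%g); rewrite xE X0 addr0.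
    by rewrite repr_mx1 mulmx1.
  - case: (set_0Vmem D) => [D0|[[p q] pqD]].
      by apply: (IH D _ hDP X hX x xE); rewrite D0 cards0.
    have /andP [/= j0p /= qj0] := hDP _ pqD.
    set c := X p q.
    set X' := X - c *: delta_mx p q.
    have hX' : forall i j, X' i j != 0 -> (i, j) \in D :\ (p, q).
      move=> i j; rewrite !mxE in_setD1 => nz.
      have nipq : (i, j) != (p, q).
        by apply: contraNneq nz => -[-> ->]; rewrite !eqxx mulr1 subrr.
      rewrite nipq /=; apply: hX; move: nz; rewrite xpair_eqE in nipq.
      by case/nandP: nipq => /negbTE ->; rewrite ?andbF /= mulr0 subr0.
    have hpq : p != q by rewrite ordF' //; slia.
    have EU : Emx p q c \in unitmx by rewrite unitmxE det_Emx (negbTE hpq) unitr1.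
    pose e : {'GL_n[k]} := FinRing.Unit EU.
    have dec : (1%:M + X') *m Emx p q c = 1%:M + X.
      rewrite /Emx mulmxDr mulmx1 -scalemxAr mulmxDl mul1mx.
      have -> : X' *m delta_mx p q = 0.
        apply/matrixP => i j; rewrite mul_delta_r [RHS]mxE.
        have : X' i p == 0.
          apply/negPn/negP => /hX'; rewrite in_setD1 => /andP [_ /hDP /andP [_ /=]].
          by rewrite leqNgt j0p.
        by move/eqP ->; rewrite mul0r.
      by rewrite addr0 -addrA subrK.
    have U' : (1%:M + X') \in unitmx.
      have h := GL_unit x; rewrite xE -dec in h.
      have : (1%:M + X') *m Emx p q c \in unitmx := h.
      by rewrite unitmx_mul => /andP [].
    pose x' : {'GL_n[k]} := FinRing.Unit U'.
    have xx : x = (x' * e)%g.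
      by apply: val_inj; change (GLval x = GLval (x' * e)%g); rewrite GL_MxE xE -dec.
    rewrite xx (repr_mxM rho) ?inE // mulmxA.
    rewrite (IH (D :\ (p, q)) _ _ X' hX' x') //.
    + by apply: (key p q c).
    + by move: hD; rewrite (cardsD1 (p, q) D) pqD.
    + by move=> ij; rewrite in_setD1 => /andP [_ /hDP].
pose r : 'S_N.+1 := perm (@rev_ord_inj N.+1).
have rE : forall i, (r i : nat) = (N - i)%N by move=> i; rewrite permE /= subSS.
pose h : {'GL_n[k]} := FinRing.Unit (@unitmx_perm k _ (r^-1)%g).
pose s0 : 'I_N.+1 := inord t.
have s0E : (s0 : nat) = t by rewrite inordK //; rewrite /t; slia.
case: hcusp => _ hc; apply: (hc [set s0] h).
  by exists s0; rewrite ?inE // s0E; case/andP: ht.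
move=> u uS.
have blkE : forall a : 'I_N.+1, blk [set s0] a = (t <= a)%N.
  move=> a; rewrite /blk; case: (boolP (t <= a)%N) => ta.
  - rewrite (_ : [set _ in _ | _] = [set s0]) ?cards1 //.
    apply/setP => z; rewrite !inE; case: (z =P s0) => //= ->.
    by rewrite s0E ta andbT; case/andP: ht.
  - rewrite (_ : [set _ in _ | _] = set0) ?cards0 //.
    apply/setP => z; rewrite !inE; case: (z =P s0) => //= ->.
    by rewrite s0E (negbTE ta) andbF.
have uE : GLval (u ^ h)%g = \matrix_(i, j) GLval u (r i) (r j).
  rewrite conjgE !GL_MxE GL_VxE /=.
  rewrite -[invmx _]/((perm_mx (r^-1)%g)^-1) -perm_mxV invgK -row_permE -col_permE.
  by apply/matrixP => i j; rewrite !mxE.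
pose D := [set ij : 'I_N.+1 * 'I_N.+1 | (j0 < ij.1)%N && (ij.2 <= j0)%N].
apply: (step2 #|D| D (leqnn _) _ (GLval (u ^ h)%g - 1%:M)).
- by move=> ij; rewrite inE.
- move=> i j; rewrite uE !mxE => nz; rewrite inE /=.
  move: uS; rewrite inE => /forallP /(_ (r i)) /forallP /(_ (r j)) /orP [/eqP e | ].
    by rewrite e (inj_eq perm_inj) subrr eqxx in nz.
  rewrite !blkE !rE.
  case: (leqP t (N - i)%N) => hi; case: (leqP t (N - j)%N) => hj //= _.
  apply/andP; split; rewrite /t in hi hj; slia.
- by rewrite addrC subrK.
Qed.
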